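(* Let $p$ be a prime, $w\ge1$, $\mu\ge1$ an integer. Let $C\subseteq\mathbb{F}_{p^w}^n$ be a linear $[n,k]$ code with $0<k<n$, with parity-check matrix $H\in\mathbb{F}_{p^w}^{(n-k)\times n}$ (a generator matrix of $C^\perp$) having columns $\mathbf h_1^T,\dots,\mathbf h_n^T$, and let $d^\perp$ be the minimum distance of $C^\perp$. Let $[n]=I_1\sqcup I_2\sqcup I_3$ be a partition with $|I_1|=|I_2|=n-d^\perp+1$. Let $\boldsymbol\tau=(\tau^{(1)},\dots,\tau^{(n)})$, $\tau^{(j)}:\mathbb{F}_{p^w}\to\{0,1\}^\mu$. Then \[ SD(\boldsymbol\tau(C),\boldsymbol\tau(\mathcal U_n))\le\frac12\cdot2^{\mu(n-d^\perp+1)}\sum_{(\ell_j)_{j\in I_3}\in(\{0,1\}^\mu)^{I_3}}\ \max_{\boldsymbol\beta\in\mathbb{F}_{p^w}^{n-k}\setminus\{\mathbf 0\}}\ \prod_{j\in I_3}\left|\widehat{\mathbb 1_{\ell_j}}(\langle\boldsymbol\beta,\mathbf h_j\rangle)\right|. \]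
   Context: $\mathrm{Tr}$ is the trace $\mathbb{F}_{p^w}\to\mathbb{F}_p$ (values in $\{0,\dots,p-1\}$), $\omega_p=e^{2\pi\mathbf i/p}$, $\hat f(\alpha)=p^{-w}\sum_xf(x)\omega_p^{\mathrm{Tr}(\alpha x)}$. For $\ell_j\in\{0,1\}^\mu$, $\mathbb 1_{\ell_j}$ is the indicator of $(\tau^{(j)})^{-1}(\ell_j)$. For $S\subseteq\mathbb{F}_{p^w}^n$, $\boldsymbol\tau(S)$ is the distribution of $(\tau^{(j)}(x_j))_j$ with $\mathbf x$ uniform on $S$; $\mathcal U_n=\mathbb{F}_{p^w}^n$; $SD$ is statistical distance. An empty product equals $1$. *)

(* Defs.v *)
From HB Require Import structures.
From mathcomp Require Import all_boot all_order all_algebra all_field.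
From mathcomp Require Import reals trigo complex.
Set Implicit Arguments. Unset Strict Implicit. Unset Printing Implicit Defensive.
Import Order.TTheory GRing.Theory Num.Theory.
Local Open Scope ring_scope.

Section Defs.
Variable F : finFieldType.

(* absolute trace Tr : F_{p^w} -> F_p, as an element of F: sum_{i<w} x^(p^i) *)
Definition trF (p w : nat) (x : F) : F := \sum_(i < w) x ^+ (p ^ i).

(* Tr(x) as a natural number in {0,...,p-1}: the c < p with c%:R = Tr(x) *)
Definition trn (p w : nat) (x : F) : nat :=
  find (fun c : nat => (c%:R : F) == trF p w x) (iota 0 p).

Definition bv (mu : nat) := {ffun 'I_mu -> bool}.

Variable R : realType.

Definition omega (p : nat) : R[i] :=
  Complex (cos (2 * pi / p%:R)) (sin (2 * pi / p%:R)).

Definition fourier (p w : nat) (f : F -> R[i]) (a : F) : R[i] :=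
  ((p ^ w)%:R)^-1 * \sum_(x : F) f x * omega p ^+ trn p w (a * x).

Definition ind (mu : nat) (t : F -> bv mu) (l : bv mu) : F -> R[i] :=
  fun x => (t x == l)%:R.

Definition cabs (z : R[i]) : R := Normc.normc z.

Definition wt (n : nat) (v : 'rV[F]_n) : nat := #|[set j | v 0 j != 0]|.

(* minimum distance of the code generated by the rows of H (H of full row rank) *)
Definition dual_dist (m n : nat) (H : 'M[F]_(m, n)) : nat :=
  \big[minn/n]_(b : 'rV[F]_m | b != 0) wt (b *m H).

Definition code (m n : nat) (H : 'M[F]_(m, n)) : {set 'rV[F]_n} :=
  [set x : 'rV[F]_n | H *m x^T == 0].

Definition tau_img (n mu : nat) (tau : 'I_n -> F -> bv mu) (x : 'rV[F]_n)
  : {ffun 'I_n -> bv mu} := [ffun j => tau j (x 0 j)].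

Definition tau_distr (n mu : nat) (tau : 'I_n -> F -> bv mu) (S : {set 'rV[F]_n})
  (y : {ffun 'I_n -> bv mu}) : R :=
  #|[set x in S | tau_img tau x == y]|%:R / #|S|%:R.

End Defs.

Definition SD (R : realType) (T : finType) (P Q : T -> R) : R :=
  2^-1 * \sum_(y : T) `|P y - Q y|.

(* Main.v *)
Require Import Defs.
From HB Require Import structures.
From mathcomp Require Import all_boot all_order all_algebra all_field.
From mathcomp Require Import reals trigo complex.
From mathcomp Require Import zify ring lra.
Import Order.TTheory GRing.Theory Num.Theory.
Local Open Scope ring_scope.
Local Open Scope complex_scope.
Lemma sum_char (R : numFieldType) (V : finZmodType) (chi : V -> R) (z : V) :
  (forall a b, chi (a + b) = chi a * chi b) -> chi z != 1 -> \sum_v chi v = 0.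
Proof.
move=> chiD z1.
have e : \sum_v chi v = (\sum_v chi v) * chi z.
  rewrite [LHS](reindex_inj (addIr z)) mulr_suml; apply: eq_bigr => v _.
  by rewrite chiD.
have : (\sum_v chi v) * (1 - chi z) = 0 by rewrite mulrBr mulr1 -e subrr.
by move/eqP; rewrite mulf_eq0 subr_eq0 [1 == _]eq_sym (negbTE z1) orbF => /eqP.
Qed.

Lemma sum_sub_le (R : realType) (T : finType) (P : pred T) (G : T -> R) :
  (forall a, 0 <= G a) -> \sum_(a | P a) G a <= \sum_a G a.
Proof.
move=> G0; rewrite [X in _ <= X](bigID P) /= lerDl.
by apply: sumr_ge0 => a _; apply: G0.
Qed.

Lemma prod_bool_gen (R : comNzRingType) (I : finType) (P : pred I) (b : I -> bool) :
  \prod_(i | P i) ((b i)%:R : R) = ([forall (i | P i), b i])%:R.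
Proof.
case: (boolP [forall (i | P i), b i]) => [/forall_inP h|].
  by rewrite big1 // => i /h ->.
rewrite negb_forall_in => /exists_inP [i Pi bi].
by rewrite (bigD1 i) //= (negbTE bi) mul0r.
Qed.

Lemma prod_bool_all (R : comNzRingType) (I : finType) (b : I -> bool) :
  \prod_i ((b i)%:R : R) = ([forall i, b i])%:R.
Proof.
case: (boolP [forall i, b i]) => [/forallP h|].
  by rewrite big1 // => i _; rewrite h.
rewrite negb_forall => /existsP [i bi].
by rewrite (bigD1 i) //= (negbTE bi) mul0r.
Qed.

Section Split.
Variables (R : realType) (T : finType) (n : nat) (S I J : {set 'I_n}).
Hypotheses (dSI : [disjoint S & I]) (dSJ : [disjoint S & J]) (dIJ : [disjoint I & J])
  (hU : S :|: I :|: J = [set: 'I_n]).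

Lemma prod_split3 (h : 'I_n -> R) :
  \prod_j h j = \prod_(j in S) h j * \prod_(j in I) h j * \prod_(j in J) h j.
Proof.
rewrite [LHS](bigID (mem S)) /= [X in _ * X = _](bigID (mem I)) /= mulrA.
have e1 : \prod_(i < n | (i \notin S) && (i \in I)) h i = \prod_(j in I) h j.
  apply: eq_bigl => j; rewrite andbC.
  by case: (boolP (j \in I)) => // /(disjointFl dSI) ->.
have e2 : \prod_(i < n | (i \notin S) && (i \notin I)) h i = \prod_(j in J) h j.
  apply: eq_bigl => j /=.
  have : j \in S :|: I :|: J by rewrite hU inE.
  rewrite !inE; case: (boolP (j \in S)) => [js|] /=.
    by rewrite (disjointFr dSJ js).
  by case: (boolP (j \in I)) => [ji|] //=; rewrite (disjointFr dIJ ji).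
by rewrite e1 e2.
Qed.

Lemma memJ j : j \in J -> (j \notin S) && (j \notin I).
Proof.
by move=> jJ; rewrite (disjointFl dSJ jJ) (disjointFl dIJ jJ).
Qed.

Lemma split3 (Phi : {ffun {j : 'I_n | j \in S} -> T} -> R) (g : 'I_n -> T -> R) :
  \sum_(y : {ffun 'I_n -> T}) Phi [ffun s : {j | j \in S} => y (val s)] * \prod_(j in I) g j (y j) =
  (#|T| ^ #|J|)%N%:R * (\sum_u Phi u) * \prod_(j in I) \sum_t g j t.
Proof.
set res := (fun y : {ffun 'I_n -> T} => [ffun s : {j | j \in S} => y (val s)] : {ffun {j | j \in S} -> T}).
have ePhi : forall y, Phi (res y) = \sum_u Phi u * ([forall s, y (val s) == u s])%:R.
  move=> y; rewrite (bigD1 (res y)) //= big1 ?addr0.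
    by rewrite (_ : [forall s, _] = true) ?mulr1 //; apply/forallP => s; rewrite ffunE.
  move=> u /negbTE hu; rewrite (_ : [forall s, _] = false) ?mulr0 //.
  apply: negbTE; apply: contraFN hu => /forallP h; apply/eqP/ffunP => s.
  by rewrite ffunE; apply/eqP; rewrite eq_sym; apply: h.
set h := (fun (u : {ffun {j | j \in S} -> T}) (j : 'I_n) (t : T) =>
   match (insub j : option {j : 'I_n | j \in S}) with Some s => ((t == u s)%:R : R) | None => if j \in I then g j t else 1 end).
have eh : forall (u : {ffun {j : 'I_n | j \in S} -> T}) (y : {ffun 'I_n -> T}), ([forall s, y (val s) == u s])%:R * \prod_(j in I) g j (y j) =
   \prod_j h u j (y j).
  move=> u y; rewrite prod_split3.
  rewrite [X in _ = _ * X]big1 ?mulr1; last first.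
    move=> j /memJ /andP [/negbTE js /negbTE ji]; rewrite /h insubF //= ji //.
  congr (_ * _).
    rewrite -prod_bool_all [RHS]big_sub; apply: eq_bigr => s _; by rewrite /h valK.
  by apply: eq_bigr => j ji; rewrite /h insubF ?(disjointFl dSI ji) // ji.
have esum : forall (u : {ffun {j : 'I_n | j \in S} -> T}), \sum_(y : {ffun 'I_n -> T}) ([forall s, y (val s) == u s])%:R * \prod_(j in I) g j (y j) =
    (#|T| ^ #|J|)%N%:R * \prod_(j in I) \sum_t g j t.
  move=> u; rewrite (eq_bigr _ (fun y _ => eh u y)).
  rewrite -(bigA_distr_bigA (fun j t => h u j t)) /= prod_split3.
  rewrite [X in X * _ * _]big1 ?mul1r; last first.
    move=> j js; rewrite /h (insubT (fun j => j \in S) js) /=.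
    by rewrite (bigD1 (u (Sub j js))) //= eqxx big1 ?addr0 // => t /negbTE ->.
  have eI : \prod_(j in I) \sum_t h u j t = \prod_(j in I) \sum_t g j t.
    by apply: eq_bigr => j ji; rewrite /h insubF ?(disjointFl dSI ji) // ji.
  have eJ : \prod_(j in J) \sum_t h u j t = (#|T| ^ #|J|)%N%:R.
    rewrite (eq_bigr (fun _ => (#|T|%:R : R))) ?prodr_const ?natrX //.
    move=> j /memJ /andP [/negbTE js /negbTE ji]; rewrite /h insubF // ji.
    by rewrite sumr_const.
  by rewrite eI eJ mulrC.
rewrite (eq_bigr (fun y : {ffun 'I_n -> T} => \sum_u Phi u * (([forall s, y (val s) == u s])%:R * \prod_(j in I) g j (y j)))); last first.
  by move=> y _; rewrite -[Phi _]/(Phi (res y)) ePhi mulr_suml; apply: eq_bigr => u _; rewrite mulrA.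
rewrite exchange_big /=.
rewrite (eq_bigr (fun u => Phi u * ((#|T| ^ #|J|)%N%:R * \prod_(j in I) \sum_t g j t))); last first.
  by move=> u _; rewrite -mulr_sumr esum.
rewrite -mulr_suml; ring.
Qed.
End Split.

Section Main.
Variables (R : realType) (F : finFieldType) (p w : nat).
Hypotheses (pp : prime p) (chp : p \in [pchar F]) (cardF : #|F| = (p ^ w)%N) (w0 : (0 < w)%N).

Lemma frobX (i : nat) (x y : F) : (x + y) ^+ (p ^ i) = x ^+ (p ^ i) + y ^+ (p ^ i).
Proof.
elim: i => [|i IH]; first by rewrite !expr1.
by rewrite expnSr !exprM IH -!(pFrobenius_autE chp) pFrobenius_autD_comm //; exact: mulrC.
Qed.

Lemma trFD (x y : F) : trF p w (x + y) = trF p w x + trF p w y.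
Proof. by rewrite /trF -big_split /=; apply: eq_bigr => i _; rewrite frobX. Qed.

Lemma trF_frob (x : F) : trF p w x ^+ p = trF p w x.
Proof.
rewrite /trF -(pFrobenius_autE chp) (rmorph_sum (pFrobenius_aut chp)) /=.
under eq_bigr => i _ do rewrite pFrobenius_autE -exprM -expnSr.
move: cardF; case: w w0 => // w' _ cF.
rewrite big_ord_recr big_ord_recl /= -cF expf_card.
by rewrite expn0 expr1 addrC.
Qed.

Lemma natF_inj (a b : nat) : (a < p)%N -> (b < p)%N -> (a%:R : F) = b%:R -> a = b.
Proof.
wlog ab : a b / (a <= b)%N.
  move=> H ha hb e; case: (leqP a b) => h; first exact: H.
  by apply/esym/H => //; apply: ltnW.
move=> ha hb e; apply/eqP; rewrite eqn_leq ab /=.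
have : (p %| b - a)%N by rewrite (dvdn_pcharf chp) natrB // e subrr.
case: (posnP (b - a)) => [/eqP|h]; first by rewrite subn_eq0.
move/(dvdn_leq h); move: hb; lia.
Qed.

Lemma fixed_nat (y : F) : y ^+ p = y -> exists2 c, (c < p)%N & c%:R = y.
Proof.
move=> yp.
case: (boolP (y \in [seq (c%:R : F) | c <- iota 0 p])).
  by case/mapP => c; rewrite mem_iota add0n => hc ->; exists c.
move=> yn; exfalso.
have pg1 := prime_gt1 pp.
have sP : size ('X^p - 'X : {poly F}) = p.+1.
  by rewrite size_addl ?size_polyXn // size_polyN size_polyX.
have P0 : ('X^p - 'X : {poly F}) != 0 by rewrite -size_poly_eq0 sP.
have := max_poly_roots P0 (rs := y :: [seq (c%:R : F) | c <- iota 0 p]).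
rewrite /= yn size_map size_iota sP ltnn.
move=> H; suff: false by []; apply: H.
  rewrite /root !hornerE yp subrr eqxx /=; apply/allP => z /mapP [c _ ->].
  by rewrite /root !hornerE -(pFrobenius_autE chp) rmorph_nat subrr.
rewrite map_inj_in_uniq ?iota_uniq // => a b; rewrite !mem_iota !add0n.
exact: natF_inj.
Qed.

Lemma trn_spec (x : F) : (trn p w x < p)%N /\ (trn p w x)%:R = trF p w x.
Proof.
have [c cp ce] := @fixed_nat _ (trF_frob x).
set P := (fun c : nat => (c%:R : F) == trF p w x).
have hP : has P (iota 0 p).
  by apply/hasP; exists c; rewrite ?mem_iota //; apply/eqP.
have := hP; rewrite has_find size_iota => lt.
split; first exact: lt.
by have := nth_find 0%N hP; rewrite nth_iota // add0n => /eqP.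
Qed.

Lemma natF_mod (a : nat) : ((a %% p)%:R : F) = a%:R.
Proof. by rewrite [in RHS](divn_eq a p) natrD natrM (pcharf0 chp) mulr0 add0r. Qed.

Lemma trnD (x y : F) : trn p w (x + y) = ((trn p w x + trn p w y) %% p)%N.
Proof.
have [h1 e1] := trn_spec (x + y); have [h2 e2] := trn_spec x; have [h3 e3] := trn_spec y.
apply: natF_inj => //; first by rewrite ltn_pmod // prime_gt0.
by rewrite natF_mod natrD e1 e2 e3 trFD.
Qed.

Lemma size_trpoly (m : nat) :
  size (\sum_(i < m.+1) 'X^(p ^ i) : {poly F}) = (p ^ m).+1.
Proof.
elim: m => [|m IH]; first by rewrite big_ord1 expn0 size_polyXn.
rewrite big_ord_recr /= addrC size_polyDl ?size_polyXn // IH ltnS.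
by rewrite ltn_exp2l ?prime_gt1.
Qed.

Lemma trF_nz : exists x : F, trF p w x != 0.
Proof.
apply/existsP; rewrite -negb_forall; apply/negP => /forallP allz.
move: cardF allz; case: w w0 => // w' _ cF allz.
set Q := (\sum_(i < w'.+1) 'X^(p ^ i) : {poly F}).
have sQ := size_trpoly w'.
have Q0 : Q != 0 by rewrite -size_poly_eq0 sQ.
have := max_poly_roots Q0 (rs := enum F).
rewrite -cardE cF sQ ltnS leqNgt ltn_exp2l ?prime_gt1 // ltnSn /=.
move=> H; suff: false by []; apply: H; last exact: enum_uniq.
apply/allP => x _; rewrite /root /Q horner_sum.
under eq_bigr => i _ do rewrite hornerXn.
exact: (allz x).
Qed.

Let th : R := 2 * pi / p%:R.

Lemma omegaX (t : nat) : omega R p ^+ t = Complex (cos (t%:R * th)) (sin (t%:R * th)).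
Proof.
elim: t => [|t IH]; first by rewrite expr0 mul0r cos0 sin0.
rewrite exprS IH /omega -/th.
rewrite -[t.+1]addn1 natrD mulrDl mul1r cosD sinD.
by simpc; congr Complex; ring.
Qed.

Lemma p0R : (p%:R : R) != 0.
Proof. by rewrite pnatr_eq0 -lt0n prime_gt0. Qed.

Lemma omegap : omega R p ^+ p = 1.
Proof.
rewrite omegaX.
have -> : p%:R * th = pi *+ 2 by rewrite /th mulr2n; field; exact: p0R.
by rewrite cos2pi sin2pi.
Qed.

Lemma omega_neq1 (t : nat) : (0 < t)%N -> (t < p)%N -> omega R p ^+ t != 1.
Proof.
move=> t0 tp; rewrite omegaX; apply/negP => /eqP [] hc _.
set x := t%:R * th in hc.
have pgt : (0 : R) < p%:R by rewrite ltr0n prime_gt0.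
have x0 : 0 < x / 2.
  by rewrite /x /th !mulr_gt0 ?ltr0n ?invr_gt0 ?pi_gt0.
have x1 : x / 2 < pi.
  have -> : x / 2 = pi * (t%:R / p%:R) by rewrite /x /th; field; exact: p0R.
  rewrite gtr_pMr ?pi_gt0 // ltr_pdivrMr // mul1r ltr_nat //.
have s0 : 0 < sin (x / 2) by apply: sin_gt0_pi; rewrite x0 x1.
have : cos x = cos ((x/2) *+ 2) by rewrite mulr2n; congr cos; field.
rewrite cos_mulr2n hc cos2sin2 => e.
have : sin (x / 2) ^+ 2 = 0 by lra.
by move/eqP; rewrite expf_eq0 /= gt_eqF.
Qed.

Definition ee (x : F) : R[i] := omega R p ^+ trn p w x.

Lemma eeD x y : ee (x + y) = ee x * ee y.
Proof.
rewrite /ee trnD -exprD [in RHS](divn_eq (_ + _) p).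
by rewrite exprD mulnC exprM omegap expr1n mul1r.
Qed.

Lemma trn0 : trn p w (0 : F) = 0%N.
Proof.
have [h e] := trn_spec (0 : F).
apply: (natF_inj) => //; first exact: prime_gt0.
by rewrite e /trF big1 // => i _; rewrite expr0n expn_eq0 eqn0Ngt prime_gt0.
Qed.

Lemma ee0 : ee 0 = 1.
Proof. by rewrite /ee trn0 expr0. Qed.

Lemma ee_nontriv : exists z, ee z != 1.
Proof.
have [x hx] := trF_nz.
have [h e] := trn_spec x.
exists x; apply: omega_neq1 => //.
by rewrite lt0n; apply: contra hx => /eqP t0; rewrite -e t0.
Qed.

Lemma norm_omega : `|omega R p| = 1.
Proof.
by rewrite normc_def /= cos2Dsin2 sqrtr1.
Qed.

Lemma norm_ee x : `|ee x| = 1.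
Proof. by rewrite /ee normrX norm_omega expr1n. Qed.

Lemma ee_conj x : (ee x)^*%C = ee (- x).
Proof.
have h0 : ee x != 0 by rewrite -normr_eq0 norm_ee oner_eq0.
apply: (mulfI h0); rewrite -sqr_normc norm_ee expr1n -eeD subrr ee0 //.
Qed.

Lemma orth_scalar (c : F) :
  \sum_(b : F) ee (b * c) = if c == 0 then (#|F|%:R : R[i]) else 0.
Proof.
case: eqP => [->|/eqP c0].
  by under eq_bigr => b _ do rewrite mulr0 ee0; rewrite sumr_const.
have [z hz] := ee_nontriv.
apply: (@sum_char _ _ (fun b => ee (b * c)) (z / c)).
  by move=> a b; rewrite mulrDl eeD.
by rewrite divfK.
Qed.

Lemma orth_vec (m : nat) (v : 'cV[F]_m) :
  \sum_(b : 'rV[F]_m) ee ((b *m v) 0 0) =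
  if v == 0 then ((#|F| ^ m)%N%:R : R[i]) else 0.
Proof.
case: eqP => [->|/eqP v0].
  under eq_bigr => b _ do rewrite mulmx0 mxE ee0.
  by rewrite sumr_const card_mx mul1n.
have [i hi] : exists i, v i 0 != 0.
  apply/existsP; apply: contraR v0 => /existsPn h; apply/eqP/matrixP => i j.
  by rewrite ord1 mxE; apply/eqP; move: (h i); rewrite negbK.
have [z hz] := ee_nontriv.
apply: (@sum_char _ _ (fun b => ee ((b *m v) 0 0)) ((z / v i 0) *: 'e_i)).
  by move=> a b; rewrite mulmxDl mxE eeD.
by rewrite -scalemxAl -rowE !mxE divfK.
Qed.


Lemma ee_sum (I : Type) (r : seq I) (P : pred I) (f : I -> F) :
  ee (\sum_(i <- r | P i) f i) = \prod_(i <- r | P i) ee (f i).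
Proof. exact: (big_morph ee eeD ee0). Qed.

Lemma qC0 : (#|F|%:R : R[i]) != 0.
Proof. by rewrite pnatr_eq0 -lt0n; apply/card_gt0P; exists 0. Qed.

Lemma fourierE (mu : nat) (t : F -> bv mu) (l : bv mu) (g : F) :
  fourier p w (ind R t l) g = (#|F|%:R)^-1 * \sum_x (t x == l)%:R * ee (g * x).
Proof. by rewrite /fourier cardF. Qed.

Lemma prod_sumA (n : nat) (g : 'I_n -> F -> R[i]) :
  \sum_(x : 'rV[F]_n) \prod_j g j (x 0 j) = \prod_j \sum_t g j t.
Proof.
rewrite bigA_distr_bigA /=.
rewrite (reindex (fun f : {ffun 'I_n -> F} => \row_j f j)) /=.
  by apply: eq_bigr => f _; apply: eq_bigr => j _; rewrite mxE.
exists (fun x : 'rV[F]_n => [ffun j => x 0 j]) => [f _|x _].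
  by apply/ffunP => j; rewrite ffunE mxE.
by apply/matrixP => i j; rewrite mxE ffunE ord1.
Qed.

Lemma prod_bool (I : finType) (P : pred I) (b : I -> bool) :
  \prod_(i | P i) ((b i)%:R : R[i]) = ([forall (i | P i), b i])%:R.
Proof.
case: (boolP [forall (i | P i), b i]) => [/forall_inP h|].
  by rewrite big1 // => i /h ->.
rewrite negb_forall_in => /exists_inP [i Pi bi].
by rewrite (bigD1 i) //= (negbTE bi) mul0r.
Qed.

Section Code.
Variables (n m mu : nat) (H : 'M[F]_(m, n)) (Hfree : row_free H) (tau : 'I_n -> F -> bv mu).

Definition cc (j : 'I_n) (l : bv mu) (g : F) : R[i] := fourier p w (ind R (tau j) l) g.

Lemma count_gen (y : {ffun 'I_n -> bv mu}) (g : 'rV[F]_n) :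
  \sum_(x : 'rV[F]_n) \prod_j ((tau j (x 0 j) == y j)%:R * ee (g 0 j * x 0 j)) =
  (#|F| ^ n)%N%:R * \prod_j cc j (y j) (g 0 j).
Proof.
rewrite (@prod_sumA n (fun j t => (tau j t == y j)%:R * ee (g 0 j * t))).
rewrite natrX.
have -> : (#|F|%:R : R[i]) ^+ n = \prod_(j < n) #|F|%:R by rewrite prodr_const card_ord.
rewrite -big_split /=; apply: eq_bigr => j _.
by rewrite /cc fourierE mulrA mulfV ?qC0 // mul1r.
Qed.

Lemma mx_expand (b : 'rV[F]_m) (x : 'rV[F]_n) :
  (b *m (H *m x^T)) 0 0 = \sum_j (b *m H) 0 j * x 0 j.
Proof. by rewrite mulmxA mxE; apply: eq_bigr => j _; rewrite [x^T _ _]mxE. Qed.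

Lemma ind_code (x : 'rV[F]_n) :
  ((H *m x^T == 0)%:R : R[i]) =
  ((#|F| ^ m)%N%:R)^-1 * \sum_(b : 'rV[F]_m) \prod_j ee ((b *m H) 0 j * x 0 j).
Proof.
have := @orth_vec m (H *m x^T).
under eq_bigr => b _ do rewrite mx_expand ee_sum.
move=> ->; case: eqP => _; last by rewrite mulr0.
by rewrite mulVf // natrX expf_neq0 // qC0.
Qed.

Lemma card_tau_set (S : {set 'rV[F]_n}) (y : {ffun 'I_n -> bv mu}) :
  (#|[set x in S | tau_img tau x == y]|%:R : R[i]) =
  \sum_x (x \in S)%:R * \prod_j (tau j (x 0 j) == y j)%:R.
Proof.
rewrite -sumr_const big_mkcond /=; apply: eq_bigr => x _.
rewrite prod_bool inE.
have -> : (tau_img tau x == y) = [forall j, tau j (x 0 j) == y j].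
  apply/eqP/forallP => [<- j|h]; first by rewrite ffunE.
  by apply/ffunP => j; rewrite ffunE; apply/eqP.
by case: (x \in S); case: [forall _, _]; rewrite ?mul1r ?mul0r.
Qed.


Lemma count_code (y : {ffun 'I_n -> bv mu}) :
  (#|[set x in code H | tau_img tau x == y]|%:R : R[i]) =
  ((#|F| ^ m)%N%:R)^-1 * ((#|F| ^ n)%N%:R *
     \sum_(b : 'rV[F]_m) \prod_j cc j (y j) ((b *m H) 0 j)).
Proof.
rewrite card_tau_set.
under eq_bigr => x _ do rewrite inE ind_code -mulrA mulr_suml.
rewrite -mulr_sumr exchange_big /=; congr (_ * _); rewrite mulr_sumr.
apply: eq_bigr => b _; rewrite -count_gen; apply: eq_bigr => x _.
by rewrite -big_split /=; apply: eq_bigr => j _; rewrite mulrC.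
Qed.

Lemma card_code : (#|code H|%:R : R[i]) = ((#|F| ^ m)%N%:R)^-1 * (#|F| ^ n)%N%:R.
Proof.
rewrite -sumr_const big_mkcond /=.
have e0 : forall x, (if x \in code H then 1 else 0 : R[i]) = (H *m x^T == 0)%:R.
  by move=> x; rewrite inE; case: (_ == _).
under eq_bigr => x _ do rewrite e0 ind_code.
rewrite -mulr_sumr exchange_big /=; congr (_ * _).
have e : forall b : 'rV[F]_m, \sum_(x : 'rV[F]_n) \prod_j ee ((b *m H) 0 j * x 0 j) =
   if (b *m H)^T == 0 then (#|F| ^ n)%N%:R else 0.
  move=> b; rewrite -orth_vec; apply: eq_bigr => x _.
  rewrite mxE ee_sum; apply: eq_bigr => j _; by rewrite [(_ *m H)^T _ _]mxE mulrC.
under eq_bigr => b _ do rewrite e trmx_eq0 mulmx_free_eq0 //.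
rewrite (bigD1 0) //= eqxx big1 ?addr0 // => b /negbTE ->; done.
Qed.

Lemma PC_eq (y : {ffun 'I_n -> bv mu}) :
  (tau_distr R tau (code H) y)%:C = \sum_(b : 'rV[F]_m) \prod_j cc j (y j) ((b *m H) 0 j).
Proof.
rewrite /tau_distr rmorphM fmorphV /= !rmorph_nat count_code card_code.
have h1 : ((#|F| ^ m)%N%:R : R[i]) != 0 by rewrite natrX expf_neq0 // qC0.
have h2 : ((#|F| ^ n)%N%:R : R[i]) != 0 by rewrite natrX expf_neq0 // qC0.
by field; rewrite h1 h2.
Qed.

Lemma PU_eq (y : {ffun 'I_n -> bv mu}) :
  (tau_distr R tau [set: 'rV[F]_n] y)%:C = \prod_j cc j (y j) 0.
Proof.
rewrite /tau_distr rmorphM fmorphV /= !rmorph_nat card_tau_set cardsT card_mx mul1n.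
have -> : \prod_j cc j (y j) 0 = \prod_j cc j (y j) ((0 : 'rV[F]_n) 0 j).
  by apply: eq_bigr => j _; rewrite mxE.
rewrite -[X in _ = X](@mulKf _ ((#|F| ^ n)%N%:R)); last by rewrite natrX expf_neq0 // qC0.
rewrite -count_gen mulrC; congr (_ * _); apply: eq_bigr => x _.
rewrite inE mul1r; apply: eq_bigr => j _; rewrite mxE mul0r ee0 mulr1 //.
Qed.

Lemma diff_eq (y : {ffun 'I_n -> bv mu}) :
  (tau_distr R tau (code H) y - tau_distr R tau [set: 'rV[F]_n] y)%:C =
  \sum_(b : 'rV[F]_m | b != 0) \prod_j cc j (y j) ((b *m H) 0 j).
Proof.
rewrite rmorphB /= PC_eq PU_eq (bigD1 0) //=.
have -> : \prod_j cc j (y j) (((0 : 'rV[F]_m) *m H) 0 j) = \prod_j cc j (y j) 0.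
  by apply: eq_bigr => j _; rewrite mul0mx mxE.
by rewrite addrC addrK.
Qed.

Lemma cabs_sqr (z : R[i]) : ((cabs z) ^+ 2)%:C = z * z^*%C.
Proof. by rewrite rmorphXn -sqr_normc. Qed.

Lemma parseval_gen (f : F -> bool) :
  \sum_(g : F) ((#|F|%:R)^-1 * \sum_x (f x)%:R * ee (g * x)) *
               ((#|F|%:R)^-1 * \sum_x (f x)%:R * ee (g * x))^*%C =
  (#|F|%:R)^-1 * \sum_x ((f x)%:R : R[i]).
Proof.
set q := (#|F|%:R : R[i]).
have E : forall g, (q^-1 * \sum_x (f x)%:R * ee (g * x)) *
               (q^-1 * \sum_x (f x)%:R * ee (g * x))^*%C =
   q^-1 * q^-1 * \sum_x \sum_x' ((f x)%:R * (f x')%:R) * ee (g * (x - x')).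
  move=> g; rewrite rmorphM /= conjc_inv conjc_nat rmorph_sum /=.
  under [X in _ * (_ * X)]eq_bigr => x _ do rewrite rmorphM /= conjc_nat ee_conj.
  rewrite mulrACA; congr (_ * _); rewrite mulr_suml; apply: eq_bigr => x _.
  rewrite mulr_sumr; apply: eq_bigr => x' _.
  by rewrite mulrACA -eeD mulrBr.
under eq_bigr => g _ do rewrite E.
rewrite -mulr_sumr -mulrA; congr (_ * _).
rewrite exchange_big /=.
under eq_bigr => x _ do rewrite exchange_big /=.
under eq_bigr => x _ do under eq_bigr => x' _ do rewrite -mulr_sumr orth_scalar subr_eq0.
rewrite mulr_sumr; apply: eq_bigr => x _.
rewrite (bigD1 x) //= eqxx big1 ?addr0; last first.
  by move=> x' /negbTE; rewrite eq_sym => ->; rewrite mulr0.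
by case: (f x); rewrite ?mul1r ?mul0r ?mulr0 // mulVf // /q qC0.
Qed.

Lemma parseval (j : 'I_n) :
  \sum_(g : F) \sum_(l : bv mu) (cabs (cc j l g)) ^+ 2 = 1.
Proof.
apply: complexI; rewrite rmorph_sum /= rmorph1.
under eq_bigr => g _ do rewrite rmorph_sum /=.
rewrite exchange_big /=.
under eq_bigr => l _ do under eq_bigr => g _ do rewrite cabs_sqr /cc fourierE.
under eq_bigr => l _ do rewrite (parseval_gen (fun x => tau j x == l)).
rewrite -mulr_sumr exchange_big /=.
have h : forall x, \sum_(l : bv mu) ((tau j x == l)%:R : R[i]) = 1.
  move=> x; rewrite (bigD1 (tau j x)) //= eqxx big1 ?addr0 // => l /negbTE.
  by rewrite eq_sym => ->.
under eq_bigr => x _ do rewrite h.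
by rewrite sumr_const mulVf // qC0.
Qed.

Lemma dd_le (b : 'rV[F]_m) : b != 0 -> (dual_dist H <= wt (b *m H))%N.
Proof.
move=> b0; rewrite /dual_dist.
have : b \in index_enum ('rV[F]_m) by rewrite mem_index_enum.
elim: (index_enum _) => [|x r IH] //.
rewrite inE big_cons => /orP [/eqP <-|/IH h].
  by rewrite b0 geq_minl.
by case: (x != 0) => //; rewrite (leq_trans _ h) // geq_minr.
Qed.

Lemma inj_res (A : {set 'I_n}) : #|A| = (n - dual_dist H + 1)%N ->
  injective (fun b : 'rV[F]_m => [ffun s : {j | j \in A} => (b *m H) 0 (val s)]).
Proof.
move=> hA b1 b2 e; apply/eqP; rewrite -subr_eq0; apply/negP => nz.
have hz : forall j, j \in A -> ((b1 - b2) *m H) 0 j = 0.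
  move=> j hj; move/ffunP: e => /(_ (exist _ j hj)); rewrite !ffunE /= => e.
  move: e; rewrite mulmxBl; set u := b1 *m H; set v := b2 *m H => e.
  by clearbody u v; rewrite !mxE e subrr.
have h1 : (dual_dist H <= wt ((b1 - b2) *m H))%N by apply: dd_le; apply/negP.
have h2 : (wt ((b1 - b2) *m H) <= #|~: A|)%N.
  apply: subset_leq_card; apply/subsetP => j; rewrite !inE; apply: contra => hj.
  by rewrite hz.
have h3 := cardsC A; rewrite card_ord in h3.
have h4 := max_card (mem A); rewrite card_ord in h4.
move: h1 h2 h3 h4; rewrite hA; lia.
Qed.

Definition Sj (j : 'I_n) (g : F) : R := \sum_(l : bv mu) (cabs (cc j l g)) ^+ 2.

Lemma Sj_ge0 j g : 0 <= Sj j g.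
Proof. by apply: sumr_ge0 => l _; apply: sqr_ge0. Qed.

Lemma sum_bound (A : {set 'I_n}) : #|A| = (n - dual_dist H + 1)%N ->
  \sum_(b : 'rV[F]_m | b != 0) \prod_(j in A) Sj j ((b *m H) 0 j) <= 1.
Proof.
move=> hA.
set phi := (fun b : 'rV[F]_m => [ffun s : {j | j \in A} => (b *m H) 0 (val s)] : {ffun {j | j \in A} -> F}).
set G := (fun a : {ffun {j | j \in A} -> F} => \prod_s Sj (val s) (a s)).
have G0 : forall a, 0 <= G a by move=> a; apply: prodr_ge0 => s _; apply: Sj_ge0.
have eG : forall b, \prod_(j in A) Sj j ((b *m H) 0 j) = G (phi b).
  by move=> b; rewrite big_sub; apply: eq_bigr => s _; rewrite ffunE.
under eq_bigr => b _ do rewrite eG.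
apply: (@le_trans _ _ (\sum_b G (phi b))).
  by rewrite [X in _ <= X](bigD1 0) //= lerDr.
rewrite -(big_imset G (in2W (@inj_res A hA))) /=.
apply: (@le_trans _ _ (\sum_a G a)).
  exact: sum_sub_le.
have -> : \sum_a G a = \prod_(s : {j | j \in A}) \sum_(g : F) Sj (val s) g.
  by rewrite /G bigA_distr_bigA.
rewrite big1 // => s _; exact: parseval.
Qed.

Lemma norm_cabs (z : R[i]) : `|z| = (cabs z)%:C.
Proof. by case: z. Qed.

Lemma normR_C (r : R) : `|r%:C| = `|r|%:C.
Proof. by rewrite normc_def /= expr0n /= addr0 sqrtr_sqr. Qed.

Definition aa (b : 'rV[F]_m) (j : 'I_n) (l : bv mu) : R := cabs (cc j l ((b *m H) 0 j)).

Lemma aa_ge0 b j l : 0 <= aa b j l.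
Proof. by rewrite -lecR -norm_cabs normr_ge0. Qed.

Lemma pointwise (y : {ffun 'I_n -> bv mu}) :
  `|tau_distr R tau (code H) y - tau_distr R tau [set: 'rV[F]_n] y| <=
  \sum_(b : 'rV[F]_m | b != 0) \prod_j aa b j (y j).
Proof.
rewrite -lecR -normR_C diff_eq rmorph_sum /=.
apply: (le_trans (ler_norm_sum _ _ _)); apply: ler_sum => b _.
by rewrite normr_prod rmorph_prod /=; rewrite le_eqVlt; apply/orP; left; apply/eqP/eq_bigr => j _; rewrite norm_cabs.
Qed.

Variables (I1 I2 I3 : {set 'I_n}).
Hypotheses (d12 : [disjoint I1 & I2]) (d13 : [disjoint I1 & I3]) (d23 : [disjoint I2 & I3])
  (hU : I1 :|: I2 :|: I3 = [set: 'I_n])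
  (hI1 : #|I1| = (n - dual_dist H + 1)%N) (hI2 : #|I2| = (n - dual_dist H + 1)%N).

Definition Mx (l : {ffun {j : 'I_n | j \in I3} -> bv mu}) : R :=
  \big[Num.max/0]_(b : 'rV[F]_m | b != 0)
      \prod_(j : {j : 'I_n | j \in I3}) cabs (cc (val j) (l j) ((b *m H) 0 (val j))).

Lemma Mx_ge0 l : 0 <= Mx l.
Proof.
rewrite /Mx; elim/big_ind: _ => //.
  by move=> x y x0 y0; rewrite le_max x0.
by move=> b _; apply: prodr_ge0 => s _; rewrite -lecR -norm_cabs normr_ge0.
Qed.

Let hU312 : I3 :|: I1 :|: I2 = [set: 'I_n].
Proof. by rewrite -hU; apply/setP => j; rewrite !inE; case: (j \in I1); case: (j \in I2); case: (j \in I3). Qed.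
Let hU321 : I3 :|: I2 :|: I1 = [set: 'I_n].
Proof. by rewrite -hU; apply/setP => j; rewrite !inE; case: (j \in I1); case: (j \in I2); case: (j \in I3). Qed.

Let d31 : [disjoint I3 & I1]. Proof. by rewrite disjoint_sym. Qed.
Let d32 : [disjoint I3 & I2]. Proof. by rewrite disjoint_sym. Qed.
Let d21 : [disjoint I2 & I1]. Proof. by rewrite disjoint_sym. Qed.

Definition res3 (y : {ffun 'I_n -> bv mu}) : {ffun {j : 'I_n | j \in I3} -> bv mu} :=
  [ffun s : {j : 'I_n | j \in I3} => y (val s)].

Lemma step2 (b : 'rV[F]_m) (y : {ffun 'I_n -> bv mu}) : b != 0 ->
  \prod_j aa b j (y j) <=
  Mx (res3 y) * ((\prod_(j in I1) aa b j (y j) ^+ 2 + \prod_(j in I2) aa b j (y j) ^+ 2) / 2).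
Proof.
move=> b0.
rewrite (@prod_split3 R n I3 I1 I2 d31 d32 d12 hU312) -mulrA.
apply: ler_pM.
- by apply: prodr_ge0 => j _; apply: aa_ge0.
- by apply: mulr_ge0; apply: prodr_ge0 => j _; apply: aa_ge0.
- rewrite big_sub /Mx.
  have := @le_bigmax_cond _ _ _ 0 b (fun b => b != 0)
     (fun b => \prod_(j : {j : 'I_n | j \in I3}) cabs (cc (val j) (res3 y j) ((b *m H) 0 (val j)))) b0.
  by under eq_bigr => s _ do rewrite /res3 ffunE.
rewrite !prodrXl.
set A := \prod_(j in I1) aa b j (y j); set B := \prod_(j in I2) aa b j (y j).
have := sqr_ge0 (A - B); rewrite sqrrB; lra.
Qed.

Lemma main_bound :
  SD (tau_distr R tau (code H)) (tau_distr R tau [set: 'rV[F]_n]) <=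
  2^-1 * 2 ^+ (mu * (n - dual_dist H + 1)) * \sum_l Mx l.
Proof.
set N := (2 : R) ^+ (mu * (n - dual_dist H + 1)).
set SM := \sum_l Mx l.
have SM0 : 0 <= SM by apply: sumr_ge0 => l _; apply: Mx_ge0.
have cT : #|bv mu| = (2 ^ mu)%N by rewrite card_ffun card_bool card_ord.
have eS : forall (A : {set 'I_n}) (J : {set 'I_n}), [disjoint I3 & A] -> [disjoint I3 & J] ->
    [disjoint A & J] -> I3 :|: A :|: J = [set: 'I_n] -> #|J| = (n - dual_dist H + 1)%N ->
    forall b, \sum_y Mx (res3 y) * \prod_(j in A) aa b j (y j) ^+ 2 =
        N * SM * \prod_(j in A) Sj j ((b *m H) 0 j).
  move=> A J dA dJ dAJ hAJ hJ b.
  rewrite (@split3 R (bv mu) n I3 A J dA dJ dAJ hAJ Mx (fun j t => aa b j t ^+ 2)) cT hJ -expnM natrX.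
  by [].
rewrite /SD.
apply: (@le_trans _ _ (2^-1 * \sum_y \sum_(b : 'rV[F]_m | b != 0)
    Mx (res3 y) * ((\prod_(j in I1) aa b j (y j) ^+ 2 + \prod_(j in I2) aa b j (y j) ^+ 2) / 2))).
  rewrite ler_pM2l ?invr_gt0 ?ltr0n //; apply: ler_sum => y _.
  apply: (le_trans (pointwise y)); apply: ler_sum => b b0; exact: step2.
rewrite exchange_big /=.
have inner : forall b, \sum_y Mx (res3 y) * ((\prod_(j in I1) aa b j (y j) ^+ 2 +
      \prod_(j in I2) aa b j (y j) ^+ 2) / 2) =
    (N * SM) / 2 * (\prod_(j in I1) Sj j ((b *m H) 0 j) + \prod_(j in I2) Sj j ((b *m H) 0 j)).
  move=> b.
  have e1 := eS I1 I2 d31 d32 d12 hU312 hI2 b.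
  have e2 := eS I2 I1 d32 d31 d21 hU321 hI1 b.
  set P1 := \prod_(j in I1) Sj j _ in e1 *; set P2 := \prod_(j in I2) Sj j _ in e2 *.
  have -> : N * SM / 2 * (P1 + P2) = (N * SM * P1 + N * SM * P2) / 2 by ring.
  rewrite -e1 -e2 mulrDl !mulr_suml -big_split /=; apply: eq_bigr => y _; ring.
rewrite (eq_bigr _ (fun b _ => inner b)) -mulr_sumr big_split /=.
have s1 := @sum_bound I1 hI1.
have s2 := @sum_bound I2 hI2.
have N0 : 0 <= N by apply: exprn_ge0.
set X1 := \sum_(b | b != 0) _ in s1 *; set X2 := \sum_(b | b != 0) _ in s2 *.
have NS0 : 0 <= N * SM by apply: mulr_ge0.
nra.
Qed.
End Code.

End Main.

Local Close Scope complex_scope.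

Theorem lemma4p6 (R : realType) (F : finFieldType) (p w mu n k : nat) :
  prime p -> p \in [pchar F] -> #|F| = (p ^ w)%N -> (0 < w)%N -> (0 < mu)%N ->
  (0 < k)%N -> (k < n)%N ->
  forall H : 'M[F]_(n - k, n), \rank H = (n - k)%N ->
  forall I1 I2 I3 : {set 'I_n},
  [disjoint I1 & I2] -> [disjoint I1 & I3] -> [disjoint I2 & I3] ->
  I1 :|: I2 :|: I3 = [set: 'I_n] ->
  #|I1| = (n - dual_dist H + 1)%N -> #|I2| = (n - dual_dist H + 1)%N ->
  forall tau : 'I_n -> F -> bv mu,
  SD (tau_distr R tau (code H)) (tau_distr R tau [set: 'rV[F]_n]) <=
  2^-1 * 2 ^+ (mu * (n - dual_dist H + 1)) *
  \sum_(l : {ffun {j : 'I_n | j \in I3} -> bv mu})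
    \big[Num.max/0]_(b : 'rV[F]_(n - k) | b != 0)
      \prod_(j : {j : 'I_n | j \in I3})
        cabs (fourier p w (ind R (tau (val j)) (l j)) ((b *m H) 0 (val j))).
Proof.
move=> pp chp cF w0 _ _ _ H rk I1 I2 I3 d12 d13 d23 hU h1 h2 tau.
have Hfree : row_free H by rewrite /row_free rk.
exact: (@main_bound R F p w pp chp cF w0 n (n - k) mu H Hfree tau I1 I2 I3 d12 d13 d23 hU h1 h2).
Qed.
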